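(* Let $f_1,f_2$ be strongly hyperbolic functions, $p=(x_p,y_p)\in\mathbb{R}^2$, $s<0$, and let $q\in\mathcal{P}$ be a point not parallel to $p$. Then exactly one of the following holds: (1) there exists $t\in\mathbb{R}$ such that $\overline{l_{s,t}}$ contains $p$ and $q$; (2) there exist $a_1>0$, $b_1,c_1\in\mathbb{R}$ such that $\overline{f_{a_1,b_1,c_1}}$ contains $p$ and $q$ and $f'_{a_1,b_1,c_1}(x_p)=s$.
   Context: Identify $\mathbb{S}^1$ with $\mathbb{R}\cup\{\infty\}$, $\mathcal{P}=\mathbb{S}^1\times\mathbb{S}^1$, $\mathbb{R}^+=(0,\infty)$. Two points of $\mathcal{P}$ are parallel if they have the same first coordinate or the same second coordinate. A function $f:\mathbb{R}^+\to\mathbb{R}^+$ is strongly hyperbolic if: (1) $\lim_{x\to0+}f(x)=+\infty$, $\lim_{x\to+\infty}f(x)=0$; (2) $f$ strictly convex; (3) $\lim_{x\to+\infty}f(x+b)/f(x)=1$ for each $b\in\mathbb{R}$; (4) $f$ differentiable; (5) $\ln|f'|$ strictly convex. For $a>0$, $b,c\in\mathbb{R}$: $f_{a,b,c}:\mathbb{R}\setminus\{-b\}\to\mathbb{R}$, $f_{a,b,c}(x)=af_1(x+b)+c$ for $x>-b$, $f_{a,b,c}(x)=-af_2(-x-b)+c$ for $x<-b$; $\overline{f_{a,b,c}}=\{(x,f_{a,b,c}(x)):x\ne-b\}\cup\{(-b,\infty),(\infty,c)\}$; for $s,t\in\mathbb{R}$, $\overline{l_{s,t}}=\{(x,sx+t):x\in\mathbb{R}\}\cup\{(\infty,\infty)\}$.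 *)

(* Defs.v *)
From Stdlib Require Import Reals.
From Coquelicot Require Import Coquelicot.
Open Scope R_scope.

(* S^1 = R ∪ {∞}: [Some x] is the real x, [None] is ∞. *)
Definition S1 := option R.
Definition P := (S1 * S1)%type.

Definition parallel (u v : P) : Prop := fst u = fst v \/ snd u = snd v.

Definition strictly_convex_pos (g : R -> R) : Prop :=
  forall x y t, 0 < x -> 0 < y -> x <> y -> 0 < t < 1 ->
    g (t * x + (1 - t) * y) < t * g x + (1 - t) * g y.

(* strongly hyperbolic f : R^+ -> R^+ (f is given as a total function on R;
   only its values on (0,∞) matter) *)
Definition strongly_hyperbolic (f : R -> R) : Prop :=
  (forall x, 0 < x -> 0 < f x) /\
  filterlim f (at_right 0) (Rbar_locally p_infty) /\
  is_lim f p_infty 0 /\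
  strictly_convex_pos f /\
  (forall b : R, is_lim (fun x => f (x + b) / f x) p_infty 1) /\
  (forall x, 0 < x -> ex_derive f x) /\
  strictly_convex_pos (fun x => ln (Rabs (Derive f x))).

(* f_{a,b,c} as a total function; the value at x = -b is irrelevant (c). *)
Definition fabc (f1 f2 : R -> R) (a b c : R) (x : R) : R :=
  match Rlt_dec (- b) x with
  | left _ => a * f1 (x + b) + c
  | right _ =>
      match Rlt_dec x (- b) with
      | left _ => - a * f2 (- x - b) + c
      | right _ => c
      end
  end.

Definition in_fbar (f1 f2 : R -> R) (a b c : R) (u : P) : Prop :=
  (exists x, x <> - b /\ u = (Some x, Some (fabc f1 f2 a b c x))) \/
  u = (Some (- b), None) \/
  u = (None, Some c).

Definition in_lbar (s t : R) (u : P) : Prop :=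
  (exists x, u = (Some x, Some (s * x + t))) \/ u = (None, None).

(* Main.v *)
Require Import Defs.
From Stdlib Require Import Reals Lra Classical.
From Coquelicot Require Import Coquelicot.
Open Scope R_scope.

Definition good (f : R -> R) : Prop :=
  (forall x, 0 < x -> 0 < f x) /\
  filterlim f (at_right 0) (Rbar_locally p_infty) /\
  is_lim f p_infty 0 /\
  strictly_convex_pos f /\
  (forall b : R, is_lim (fun x => f (x + b) / f x) p_infty 1) /\
  (forall x, 0 < x -> ex_derive f x).

Lemma sh_good f : strongly_hyperbolic f -> good f.
Proof. intros (H1&H2&H3&H4&H5&H6&_). repeat split; auto. Qed.

Lemma lim_inf_eps (g : R -> R) (l : R) : is_lim g p_infty l ->
  forall eps, 0 < eps -> exists M, forall x, M < x -> Rabs (g x - l) < eps.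
Proof.
  intros H eps He.
  assert (Hb := H (fun y => Rabs (y - l) < eps)).
  destruct Hb as [M HM].
  - exists (mkposreal eps He). intros y Hy. exact Hy.
  - exists M. exact HM.
Qed.

Lemma right0_big f : good f -> forall M, exists d, 0 < d /\ forall y, 0 < y < d -> M < f y.
Proof.
  intros (_&H&_) M.
  assert (Hb := H (fun y => M < y)).
  destruct Hb as [eps Heps].
  - exists M. auto.
  - exists eps. split. apply cond_pos. intros y Hy. apply Heps; [|lra].
    unfold ball; simpl; unfold AbsRing_ball, abs, minus, plus, opp; simpl.
    rewrite Rabs_pos_eq; lra.
Qed.

Lemma deriv_eps f x : good f -> 0 < x -> forall eps, 0 < eps ->
  exists d, 0 < d /\ forall h, h <> 0 -> Rabs h < d ->
   Rabs ((f (x + h) - f x) / h - Derive f x) < eps.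
Proof.
  intros (_&_&_&_&_&Hd) Hx eps He.
  assert (H := Derive_correct f x (Hd x Hx)).
  apply is_derive_Reals in H.
  destruct (H eps He) as [d Hd']. exists d. split. apply cond_pos. exact Hd'.
Qed.

Lemma wtangent f x y : good f -> 0 < x -> 0 < y -> f x + Derive f x * (y - x) <= f y.
Proof.
  intros Hg Hx Hy.
  destruct (Req_dec x y) as [E|E]. subst. lra.
  destruct (Rle_lt_dec (f x + Derive f x * (y - x)) (f y)) as [L|L]; auto. exfalso.
  set (g := f x + Derive f x * (y - x) - f y).
  assert (Hg0 : 0 < g) by (unfold g; lra).
  assert (Hyx : 0 < Rabs (y - x)) by (apply Rabs_pos_lt; lra).
  destruct (deriv_eps f x Hg Hx (g / Rabs (y - x))) as [d [Hd Hd']].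
  { apply Rdiv_lt_0_compat; lra. }
  set (t := Rmin (1/2) (d / (2 * Rabs (y - x)))).
  assert (Ht0 : 0 < t). { unfold t. apply Rmin_glb_lt. lra. apply Rdiv_lt_0_compat; lra. }
  assert (Ht1 : t < 1). { unfold t. assert (H:= Rmin_l (1/2) (d / (2 * Rabs (y - x)))). lra. }
  assert (Htd : t * Rabs (y - x) < d).
  { unfold t. assert (H:= Rmin_r (1/2) (d / (2 * Rabs (y - x)))).
    apply Rle_lt_trans with (d / (2 * Rabs (y - x)) * Rabs (y-x)).
    apply Rmult_le_compat_r; lra. field_simplify; lra. }
  set (h := t * (y - x)).
  assert (Hh0 : h <> 0). { unfold h. apply Rmult_integral_contrapositive; lra. }
  assert (Hha : Rabs h = t * Rabs (y - x)). { unfold h. rewrite Rabs_mult, Rabs_pos_eq; lra. }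
  assert (Hc := proj1 (proj2 (proj2 (proj2 Hg))) y x t Hy Hx (not_eq_sym E) (conj Ht0 Ht1)).
  replace (t * y + (1 - t) * x) with (x + h) in Hc by (unfold h; ring).
  assert (Hq := Hd' h Hh0 (ltac:(lra))).
  set (Q := (f (x + h) - f x) / h) in Hq.
  assert (HQ : Q * h = f (x + h) - f x) by (unfold Q; field; auto).
  assert (H1 : (Q - Derive f x) * h < - t * g).
  { replace ((Q - Derive f x) * h) with (f (x+h) - f x - Derive f x * h) by lra.
    assert (E1 : f (x + h) - f x < t * (f y - f x)) by lra.
    assert (E2 : t * (f y - f x) = Derive f x * h - t * g) by (unfold g, h; ring).
    lra. }
  assert (H2 : Rabs ((Q - Derive f x) * h) < g / Rabs (y - x) * (t * Rabs (y - x))).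
  { rewrite Rabs_mult, Hha. apply Rmult_lt_compat_r. apply Rmult_lt_0_compat; lra. exact Hq. }
  replace (g / Rabs (y - x) * (t * Rabs (y - x))) with (t * g) in H2 by (field; lra).
  assert (H3 := Rabs_def2 _ _ H2). nra.
Qed.

Lemma stangent f x y : good f -> 0 < x -> 0 < y -> x <> y -> f x + Derive f x * (y - x) < f y.
Proof.
  intros Hg Hx Hy E.
  assert (Hc := proj1 (proj2 (proj2 (proj2 Hg))) x y (1/2) Hx Hy E ltac:(lra)).
  assert (Hw := wtangent f x ((x + y)/2) Hg Hx ltac:(lra)).
  replace (1/2 * x + (1 - 1/2) * y) with ((x+y)/2) in Hc by field. nra.
Qed.

Lemma D_incr f x y : good f -> 0 < x -> x < y -> Derive f x < Derive f y.
Proof.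
  intros Hg Hx Hxy.
  assert (H1 := stangent f x y Hg Hx ltac:(lra) ltac:(lra)).
  assert (H2 := stangent f y x Hg ltac:(lra) Hx ltac:(lra)). nra.
Qed.

Lemma D_neg f x : good f -> 0 < x -> Derive f x < 0.
Proof.
  intros Hg Hx. destruct (Rlt_le_dec (Derive f x) 0) as [L|L]; auto. exfalso.
  assert (Hfx := proj1 Hg x Hx).
  destruct (lim_inf_eps f 0 (proj1 (proj2 (proj2 Hg))) (f x) Hfx) as [M HM].
  set (y := Rmax M x + 1).
  assert (Hy1 : M < y) by (unfold y; assert (H:=Rmax_l M x); lra).
  assert (Hy2 : x < y) by (unfold y; assert (H:=Rmax_r M x); lra).
  assert (H1 := stangent f x y Hg Hx ltac:(lra) ltac:(lra)).
  assert (H2 := HM y Hy1). rewrite Rminus_0_r in H2. apply Rabs_def2 in H2. nra.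
Qed.

Lemma f_decr f x y : good f -> 0 < x -> x < y -> f y < f x.
Proof.
  intros Hg Hx Hxy.
  assert (H1 := stangent f y x Hg ltac:(lra) Hx ltac:(lra)).
  assert (H2 := D_neg f y Hg ltac:(lra)). nra.
Qed.

Lemma cont_eps (g : R -> R) x :
  (forall eps, 0 < eps -> exists d, 0 < d /\ forall y, y <> x -> Rabs (y - x) < d -> Rabs (g y - g x) < eps) ->
  continuity_pt g x.
Proof.
  intros H eps He. destruct (H eps He) as [d [Hd Hd']].
  exists d. split. lra. intros y [[_ Hy1] Hy2]. simpl in *. unfold Rdist in *.
  apply Hd'; auto.
Qed.

Lemma cont_D f x0 : good f -> 0 < x0 -> continuity_pt (Derive f) x0.
Proof.
  intros Hg Hx. apply cont_eps. intros eps He.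
  destruct (deriv_eps f x0 Hg Hx (eps/2) ltac:(lra)) as [d1 [Hd1 Hd1']].
  set (h := Rmin d1 x0 / 2).
  assert (Hh0 : 0 < h) by (unfold h; assert (0 < Rmin d1 x0) by (apply Rmin_glb_lt; lra); lra).
  assert (Hh1 : h < d1) by (unfold h; assert (H:=Rmin_l d1 x0); lra).
  assert (Hh2 : h < x0) by (unfold h; assert (H:=Rmin_r d1 x0); lra).
  exists (h/2). split. lra. intros y Hyx Hyd.
  set (D0 := Derive f x0).
  destruct (Rlt_le_dec x0 y) as [L|L].
  -
    assert (Hq := Hd1' h ltac:(lra) ltac:(rewrite Rabs_pos_eq; lra)).
    set (Q := (f (x0 + h) - f x0) / h) in Hq.
    assert (HQ : Q * h = f (x0 + h) - f x0) by (unfold Q; field; lra).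
    apply Rabs_def2 in Hq. apply Rabs_def2 in Hyd. fold D0 in Hq.
    assert (I1 := D_incr f x0 y Hg Hx L).
    assert (T1 := wtangent f x0 y Hg Hx ltac:(lra)).
    assert (T2 := wtangent f y (x0 + h) Hg ltac:(lra) ltac:(lra)).
    (* D y * (x0+h-y) <= f(x0+h) - f y <= Q h - D0 (y - x0) *)
    set (k := y - x0) in *.
    assert (E : Derive f y * (h - k) <= Q * h - D0 * k).
    { replace (x0 + h - y) with (h - k) in T2 by (unfold k; ring). fold D0 in T1.
      replace (y - x0) with k in T1 by reflexivity. lra. }
    assert (E2 : (Derive f y - D0) * (h - k) <= (Q - D0) * h) by nra.
    assert (E3 : (Q - D0) * h <= (eps/2) * h) by (apply Rmult_le_compat_r; lra).
    assert (E4 : (Derive f y - D0) * (h/2) <= (Derive f y - D0) * (h - k)).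
    { apply Rmult_le_compat_l; [fold D0 in I1; lra| lra]. }
    rewrite Rabs_pos_eq by (fold D0 in I1; lra). nra.
  - assert (L' : y < x0) by lra.
    assert (Hq := Hd1' (-h) ltac:(lra) ltac:(rewrite Rabs_Ropp, Rabs_pos_eq; lra)).
    set (Q := (f (x0 + - h) - f x0) / - h) in Hq.
    assert (HQ : Q * h = f x0 - f (x0 + - h)) by (unfold Q; field; lra).
    apply Rabs_def2 in Hq. apply Rabs_def2 in Hyd. fold D0 in Hq.
    assert (I1 := D_incr f y x0 Hg ltac:(lra) L').
    assert (T1 := wtangent f x0 y Hg Hx ltac:(lra)).
    assert (T2 := wtangent f y (x0 + - h) Hg ltac:(lra) ltac:(lra)).
    set (k := x0 - y) in *.
    assert (E : Q * h - D0 * k <= Derive f y * (h - k)).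
    { replace (x0 + - h - y) with (-(h - k)) in T2 by (unfold k; ring). fold D0 in T1.
      replace (y - x0) with (-k) in T1 by (unfold k; ring). lra. }
    assert (E2 : (Q - D0) * h <= (Derive f y - D0) * (h - k)) by nra.
    assert (E3 : - (eps/2) * h <= (Q - D0) * h) by (apply Rmult_le_compat_r; lra).
    assert (E4 : (Derive f y - D0) * (h - k) <= (Derive f y - D0) * (h/2)).
    { apply Rmult_le_compat_neg_l; [fold D0 in I1; lra| unfold k; lra]. }
    rewrite Rabs_left1 by (fold D0 in I1; lra). nra.
Qed.

Lemma cont_f f x : good f -> 0 < x -> continuity_pt f x.
Proof.
  intros Hg Hx. apply derivable_continuous_pt.
  exists (Derive f x). apply is_derive_Reals. apply Derive_correct.
  apply (proj2 (proj2 (proj2 (proj2 (proj2 Hg))))). exact Hx.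
Qed.

Lemma cont_shift (g : R -> R) d x : continuity_pt g (x + d) -> continuity_pt (fun u => g (u + d)) x.
Proof.
  intro H. apply (continuity_pt_comp (fun u => u + d) g x); auto.
  apply (continuity_pt_plus (fun u => u) (fun _ => d)). apply continuity_pt_id.
  apply continuity_pt_const. intros a b; reflexivity.
Qed.

Lemma cont_refl (g : R -> R) e x : continuity_pt g (e - x) -> continuity_pt (fun u => g (e - u)) x.
Proof.
  intro H. apply (continuity_pt_comp (fun u => e - u) g x); auto.
  apply (continuity_pt_minus (fun _ => e) (fun u => u)). 
  apply continuity_pt_const. intros a b; reflexivity. apply continuity_pt_id.
Qed.

Lemma cont_plus (g h : R -> R) x : continuity_pt g x -> continuity_pt h x -> continuity_pt (fun u => g u + h u) x.
Proof. intros; apply (continuity_pt_plus g h x); auto. Qed.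
Lemma cont_minus (g h : R -> R) x : continuity_pt g x -> continuity_pt h x -> continuity_pt (fun u => g u - h u) x.
Proof. intros; apply (continuity_pt_minus g h x); auto. Qed.
Lemma cont_scal (g : R -> R) a x : continuity_pt g x -> continuity_pt (fun u => a * g u) x.
Proof. intros; apply (continuity_pt_scal g a x); auto. Qed.

Lemma ivt_up (g : R -> R) a b : a < b -> (forall x, a <= x <= b -> continuity_pt g x) ->
  g a < 0 -> 0 < g b -> exists z, a <= z <= b /\ g z = 0.
Proof.
  intros Hab Hc Ha Hb. destruct (Ranalysis5.IVT_interv g a b Hc Hab Ha Hb) as [z Hz]. exists z; auto.
Qed.

Lemma ivt_down (g : R -> R) a b : a < b -> (forall x, a <= x <= b -> continuity_pt g x) ->
  0 < g a -> g b < 0 -> exists z, a <= z <= b /\ g z = 0.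
Proof.
  intros Hab Hc Ha Hb. destruct (ivt_up (fun u => - g u) a b Hab) as [z Hz].
  - intros x Hx. apply (continuity_pt_opp g x). auto.
  - lra. - lra.
  - exists z. lra.
Qed.

Lemma small_pt f T C u1 : good f -> 0 < T -> 0 < u1 ->
  exists u, 0 < u < u1 /\ f u + C < T * (- Derive f u).
Proof.
  intros Hg HT Hu1.
  set (u0 := Rmin u1 T / 2).
  assert (Hm : 0 < Rmin u1 T) by (apply Rmin_glb_lt; lra).
  assert (Hu0 : 0 < u0) by (unfold u0; lra).
  assert (Hu01 : u0 < u1) by (unfold u0; assert (H:=Rmin_l u1 T); lra).
  assert (Hu0T : u0 <= T/2) by (unfold u0; assert (H:=Rmin_r u1 T); lra).
  set (A := Rabs (f u0 + C) + 1).
  assert (HA : f u0 + C < A) by (unfold A; assert (H:= Rle_abs (f u0 + C)); lra).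
  assert (HA0 : 0 < A) by (unfold A; assert (H:= Rabs_pos (f u0 + C)); lra).
  destruct (right0_big f Hg (f u0 + u0 * (2 / T) * A)) as [d [Hd Hd']].
  set (u := Rmin d u0 / 2).
  assert (Hm2 : 0 < Rmin d u0) by (apply Rmin_glb_lt; lra).
  assert (Hu : 0 < u) by (unfold u; lra).
  assert (Hud : u < d) by (unfold u; assert (H:=Rmin_l d u0); lra).
  assert (Huu0 : u < u0) by (unfold u; assert (H:=Rmin_r d u0); lra).
  exists u. split. lra.
  assert (Hfu := Hd' u ltac:(lra)).
  assert (Tg := wtangent f u u0 Hg Hu Hu0).
  assert (Dn := D_neg f u Hg Hu).
  set (E := - Derive f u) in *.
  assert (E1 : f u <= f u0 + E * (u0 - u)) by (unfold E in *; lra).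
  assert (E2 : E * (u0 - u) <= E * u0) by (apply Rmult_le_compat_l; unfold E; lra).
  assert (E3 : f u - f u0 <= E * u0) by lra.
  assert (E4 : u0 * ((2 / T) * A) < u0 * E) by lra.
  apply Rmult_lt_reg_l in E4; [|lra].
  assert (E5 : A < T / 2 * E).
  { apply Rmult_lt_compat_l with (r := T/2) in E4; [|lra].
    replace (T / 2 * (2 / T * A)) with A in E4 by (field; lra). exact E4. }
  assert (E6 : E * u0 <= E * (T/2)) by (apply Rmult_le_compat_l; unfold E; lra).
  nra.
Qed.

Lemma near0_big f M v1 : good f -> 0 < v1 -> exists v, 0 < v < v1 /\ M < f v.
Proof.
  intros Hg Hv. destruct (right0_big f Hg M) as [d [Hd Hd']].
  exists (Rmin d v1 / 2).
  assert (Hm2 : 0 < Rmin d v1) by (apply Rmin_glb_lt; lra).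
  assert (H1 := Rmin_l d v1). assert (H2 := Rmin_r d v1).
  split. lra. apply Hd'. lra.
Qed.

Lemma big_pt f T : good f -> 0 < T -> exists u, 0 < u /\ T * (- Derive f u) < f u.
Proof.
  intros Hg HT.
  destruct (lim_inf_eps _ 1 (proj1 (proj2 (proj2 (proj2 (proj2 Hg)))) (-1)) (1/T)) as [M HM].
  { apply Rdiv_lt_0_compat; lra. }
  set (u := Rmax M 1 + 1).
  assert (Hu1 : M < u) by (unfold u; assert (H:=Rmax_l M 1); lra).
  assert (Hu2 : 1 < u) by (unfold u; assert (H:=Rmax_r M 1); lra).
  exists u. split. lra.
  assert (H := HM u Hu1). apply Rabs_def2 in H.
  assert (Hfu := proj1 Hg u ltac:(lra)).
  assert (Tg := wtangent f u (u + -1) Hg ltac:(lra) ltac:(lra)).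
  assert (H2 : f (u + -1) < f u + f u / T).
  { destruct H as [H _]. apply (Rmult_lt_compat_r (f u)) in H; [|lra].
    replace ((f (u + -1) / f u - 1) * f u) with (f (u + -1) - f u) in H by (field; lra).
    replace (1 / T * f u) with (f u / T) in H by (field; lra). lra. }
  assert (H3 : - Derive f u <= f (u + -1) - f u) by lra.
  apply Rle_lt_trans with (T * (f (u + -1) - f u)). apply Rmult_le_compat_l; lra.
  apply Rmult_lt_compat_l with (r := T) in H2; [|lra].
  replace (T * (f u + f u / T)) with (T * f u + f u) in H2 by (field; lra). lra.
Qed.

Lemma ratio_pt f d K t0 : good f -> 0 < d -> K < 1 -> 0 <= t0 ->
  exists t, t0 < t /\ K * (- Derive f t) < - Derive f (t + d).
Proof.
  intros Hg Hd HK Ht0.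
  destruct (Rle_lt_dec K 0) as [K0|K0].
  { exists (t0 + 1). split. lra.
    assert (H1 := D_neg f (t0+1) Hg ltac:(lra)). assert (H2 := D_neg f (t0+1+d) Hg ltac:(lra)). nra. }
  apply NNPP. intro Hn.
  assert (Hall : forall t, t0 < t -> - Derive f (t + d) <= K * (- Derive f t)).
  { intros t Ht. apply Rnot_lt_le. intro C. apply Hn. exists t. auto. }
  set (g := fun t => f (t + d) - K * f t).
  assert (Hder : forall x, 0 < x -> is_derive g x (Derive f (x + d) - K * Derive f x)).
  { intros x Hx. unfold g. assert (Hex := proj2 (proj2 (proj2 (proj2 (proj2 Hg))))).
    assert (E1 := Hex (x + d) ltac:(lra)). assert (E2 := Hex x Hx).
    auto_derive. auto. change (fun x0 : R => f x0) with f. ring. }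
  assert (Hmono : forall t t', t0 < t -> t < t' -> g t <= g t').
  { intros t t' Ht Htt.
    destruct (MVT_gen g t t' (fun x => Derive f (x + d) - K * Derive f x)) as [c [Hc Hc']].
    - intros x Hx. rewrite Rmin_left in Hx by lra. apply Hder. lra.
    - intros x Hx. rewrite Rmin_left in Hx by lra. apply derivable_continuous_pt.
      exists (Derive f (x + d) - K * Derive f x). apply is_derive_Reals. apply Hder. lra.
    - rewrite Rmin_left in Hc by lra. rewrite Rmax_right in Hc by lra.
      assert (Hcc : t0 < c) by lra. assert (Hh := Hall c Hcc).
      assert (0 <= Derive f (c + d) - K * Derive f c) by lra. nra. }
  assert (Hle : forall t, t0 < t -> g t <= 0).
  { intros t Ht. apply Rnot_lt_le. intro C.
    assert (Hfx := proj1 (proj2 (proj2 Hg))).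
    destruct (lim_inf_eps f 0 Hfx (g t) C) as [M HM].
    set (t' := Rmax M t + 1).
    assert (H1 : M < t') by (unfold t'; assert (H:=Rmax_l M t); lra).
    assert (H2 : t < t') by (unfold t'; assert (H:=Rmax_r M t); lra).
    assert (Hm := Hmono t t' Ht H2).
    assert (Hb := HM (t' + d) ltac:(lra)). rewrite Rminus_0_r in Hb. apply Rabs_def2 in Hb.
    assert (Hp := proj1 Hg t' ltac:(lra)). assert (0 <= K * f t') by (apply Rmult_le_pos; lra). unfold g in *. lra. }
  destruct (lim_inf_eps _ 1 (proj1 (proj2 (proj2 (proj2 (proj2 Hg)))) d) (1 - K) ltac:(lra)) as [M HM].
  set (t := Rmax M t0 + 1).
  assert (H1 : M < t) by (unfold t; assert (H:=Rmax_l M t0); lra).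
  assert (H2 : t0 < t) by (unfold t; assert (H:=Rmax_r M t0); lra).
  assert (Hr := HM t H1). apply Rabs_def2 in Hr.
  assert (Hft := proj1 Hg t ltac:(lra)).
  assert (Hl := Hle t H2). unfold g in Hl.
  destruct Hr as [_ Hr].
  assert (f (t + d) / f t <= K).
  { apply (Rmult_le_reg_r (f t)). lra. replace (f (t + d) / f t * f t) with (f (t+d)) by (field; lra). lra. }
  lra.
Qed.

Lemma cont_mD f x : good f -> 0 < x -> continuity_pt (fun u => - Derive f u) x.
Proof. intros Hg Hx. apply (continuity_pt_opp (Derive f) x). apply cont_D; auto. Qed.

Lemma formP f d K : good f -> 0 < d -> 0 < K < 1 ->
  exists u, 0 < u /\ f u - f (u + d) = K * d * (- Derive f u).
Proof.
  intros Hg Hd HK.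
  destruct (ratio_pt f d K 0 Hg Hd ltac:(lra) ltac:(lra)) as [t [Ht Ht']].
  destruct (small_pt f (K * d) 0 t Hg ltac:(nra) Ht) as [us [Hus Hus']].
  set (phi := fun u => f u - f (u + d) - K * d * (- Derive f u)).
  destruct (ivt_up phi us t) as [z [Hz Hz']].
  - lra.
  - intros x Hx. unfold phi. apply cont_minus. apply cont_minus.
    apply cont_f; auto; lra. apply cont_shift. apply cont_f; auto; lra.
    apply cont_scal. apply cont_mD; auto; lra.
  - unfold phi. assert (H := proj1 Hg (us + d) ltac:(lra)). lra.
  - unfold phi. assert (Tg := wtangent f (t + d) t Hg ltac:(lra) ltac:(lra)).
    assert (H : d * (K * - Derive f t) < d * (- Derive f (t + d))) by (apply Rmult_lt_compat_l; lra).
    replace (t - (t + d)) with (- d) in Tg by ring. nra.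
  - exists z. split. lra. unfold phi in Hz'. lra.
Qed.

Lemma formQ f d K : good f -> 0 < d -> 1 < K ->
  exists u, d < u /\ f (u - d) - f u = K * d * (- Derive f u).
Proof.
  intros Hg Hd HK.
  destruct (near0_big f (f d + K * d * (- Derive f d)) d Hg Hd) as [v [Hv Hv']].
  destruct (ratio_pt f d (1/K) v Hg Hd) as [t [Ht Ht']].
  { apply (Rmult_lt_reg_r K). lra. field_simplify; lra. }
  { lra. }
  set (phi := fun u => f (u - d) - f u - K * d * (- Derive f u)).
  destruct (ivt_down phi (v + d) (t + d)) as [z [Hz Hz']].
  - lra.
  - intros x Hx. unfold phi. apply cont_minus. apply cont_minus.
    unfold Rminus. apply cont_shift. apply cont_f; auto; lra. apply cont_f; auto; lra.
    apply cont_scal. apply cont_mD; auto; lra.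
  - unfold phi. replace (v + d - d) with v by ring.
    assert (H1 := f_decr f d (v + d) Hg Hd ltac:(lra)).
    assert (H2 := D_incr f d (v + d) Hg Hd ltac:(lra)).
    assert (H3 : K * d * - Derive f (v + d) < K * d * - Derive f d).
    { apply Rmult_lt_compat_l. nra. lra. }
    lra.
  - unfold phi. replace (t + d - d) with t by ring.
    assert (Tg := wtangent f t (t + d) Hg ltac:(lra) ltac:(lra)).
    replace (t + d - t) with d in Tg by ring.
    assert (H : - Derive f t < K * - Derive f (t + d)).
    { apply (Rmult_lt_compat_l K) in Ht'; [|lra].
      replace (K * (1 / K * - Derive f t)) with (- Derive f t) in Ht' by (field; lra). lra. }
    assert (H2 : d * - Derive f t < d * (K * - Derive f (t + d))) by (apply Rmult_lt_compat_l; lra).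
    nra.
  - exists z. split. lra. unfold phi in Hz'. lra.
Qed.

Lemma formS f g e T : good f -> good g -> 0 < e -> 0 < T ->
  exists u, 0 < u < e /\ f u + g (e - u) = T * (- Derive f u).
Proof.
  intros Hf Hg He HT.
  destruct (small_pt f T (g (e/2)) (e/2) Hf HT ltac:(lra)) as [us [Hus Hus']].
  destruct (near0_big g (T * (- Derive f (e/2))) (e/2) Hg ltac:(lra)) as [v [Hv Hv']].
  set (phi := fun u => f u + g (e - u) - T * (- Derive f u)).
  destruct (ivt_up phi us (e - v)) as [z [Hz Hz']].
  - lra.
  - intros x Hx. unfold phi. apply cont_minus. apply cont_plus.
    apply cont_f; auto; lra. apply cont_refl. apply cont_f; auto; lra.
    apply cont_scal. apply cont_mD; auto; lra.
  - unfold phi. assert (H := f_decr g (e/2) (e - us) Hg ltac:(lra) ltac:(lra)). lra.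
  - unfold phi. replace (e - (e - v)) with v by ring.
    assert (H1 := D_incr f (e/2) (e - v) Hf ltac:(lra) ltac:(lra)).
    assert (H2 := proj1 Hf (e - v) ltac:(lra)).
    assert (H3 : T * - Derive f (e - v) < T * - Derive f (e/2)) by (apply Rmult_lt_compat_l; lra).
    lra.
  - exists z. split. lra. unfold phi in Hz'. lra.
Qed.

Lemma formB f T : good f -> 0 < T -> exists u, 0 < u /\ f u = T * (- Derive f u).
Proof.
  intros Hf HT.
  destruct (big_pt f T Hf HT) as [ul [Hul Hul']].
  destruct (small_pt f T 0 ul Hf HT Hul) as [us [Hus Hus']].
  set (phi := fun u => f u - T * (- Derive f u)).
  destruct (ivt_up phi us ul) as [z [Hz Hz']].
  - lra.
  - intros x Hx. unfold phi. apply cont_minus. apply cont_f; auto; lra.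
    apply cont_scal. apply cont_mD; auto; lra.
  - unfold phi. lra.
  - unfold phi. lra.
  - exists z. split. lra. unfold phi in Hz'. lra.
Qed.

Lemma fabc_r f1 f2 a b c x : - b < x -> fabc f1 f2 a b c x = a * f1 (x + b) + c.
Proof. intro H. unfold fabc. destruct (Rlt_dec (- b) x); [reflexivity|lra]. Qed.

Lemma fabc_l f1 f2 a b c x : x < - b -> fabc f1 f2 a b c x = - a * f2 (- x - b) + c.
Proof. intro H. unfold fabc. destruct (Rlt_dec (- b) x); [lra|]. destruct (Rlt_dec x (- b)); [reflexivity|lra]. Qed.

Lemma deriv_r f1 f2 a b c x : good f1 -> 0 < x + b ->
  is_derive (fabc f1 f2 a b c) x (a * Derive f1 (x + b)).
Proof.
  intros Hg Hx.
  apply is_derive_ext_loc with (f := fun t => a * f1 (t + b) + c).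
  - apply locally_interval with (a := Finite (- b)) (b := p_infty).
    simpl; lra. simpl; auto. intros y Hy _. simpl in Hy. rewrite fabc_r; auto.
  - assert (E := proj2 (proj2 (proj2 (proj2 (proj2 Hg)))) (x + b) Hx).
    auto_derive. auto. change (fun x0 : R => f1 x0) with f1. ring.
Qed.

Lemma deriv_l f1 f2 a b c x : good f2 -> x + b < 0 ->
  is_derive (fabc f1 f2 a b c) x (a * Derive f2 (- x - b)).
Proof.
  intros Hg Hx.
  apply is_derive_ext_loc with (f := fun t => - a * f2 (- t - b) + c).
  - apply locally_interval with (a := m_infty) (b := Finite (- b)).
    simpl; auto. simpl; lra. intros y _ Hy. simpl in Hy. rewrite fabc_l; auto.
  - assert (E := proj2 (proj2 (proj2 (proj2 (proj2 Hg)))) (- x - b) ltac:(lra)).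
    auto_derive. unfold Rminus in E. auto. change (fun x0 : R => f2 x0) with f2.
    replace (- x + - b) with (- x - b) by ring. ring.
Qed.

Lemma qR f1 f2 a b c x y : - b < x -> y = a * f1 (x + b) + c -> in_fbar f1 f2 a b c (Some x, Some y).
Proof. intros H E. left. exists x. split. lra. rewrite fabc_r; auto. subst; reflexivity. Qed.

Lemma qL f1 f2 a b c x y : x < - b -> y = - a * f2 (- x - b) + c -> in_fbar f1 f2 a b c (Some x, Some y).
Proof. intros H E. left. exists x. split. lra. rewrite fabc_l; auto. subst; reflexivity. Qed.

Lemma pR f1 f2 xp yp s u : good f1 -> 0 < u -> s < 0 ->
  0 < s / Derive f1 u /\
  in_fbar f1 f2 (s / Derive f1 u) (u - xp) (yp - s / Derive f1 u * f1 u) (Some xp, Some yp) /\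
  is_derive (fabc f1 f2 (s / Derive f1 u) (u - xp) (yp - s / Derive f1 u * f1 u)) xp s.
Proof.
  intros Hg Hu Hs. assert (HD := D_neg f1 u Hg Hu).
  split. apply Rdiv_neg_neg; auto.
  split. apply qR. lra. replace (xp + (u - xp)) with u by ring. ring.
  assert (H := deriv_r f1 f2 (s / Derive f1 u) (u - xp) (yp - s / Derive f1 u * f1 u) xp Hg ltac:(lra)).
  replace (xp + (u - xp)) with u in H by ring.
  replace (s / Derive f1 u * Derive f1 u) with s in H by (field; lra). exact H.
Qed.

Lemma pL f1 f2 xp yp s u : good f2 -> 0 < u -> s < 0 ->
  0 < s / Derive f2 u /\
  in_fbar f1 f2 (s / Derive f2 u) (- xp - u) (yp + s / Derive f2 u * f2 u) (Some xp, Some yp) /\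
  is_derive (fabc f1 f2 (s / Derive f2 u) (- xp - u) (yp + s / Derive f2 u * f2 u)) xp s.
Proof.
  intros Hg Hu Hs. assert (HD := D_neg f2 u Hg Hu).
  split. apply Rdiv_neg_neg; auto.
  split. apply qL. lra. replace (- xp - (- xp - u)) with u by ring. ring.
  assert (H := deriv_l f1 f2 (s / Derive f2 u) (- xp - u) (yp + s / Derive f2 u * f2 u) xp Hg ltac:(lra)).
  replace (- xp - (- xp - u)) with u in H by ring.
  replace (s / Derive f2 u * Derive f2 u) with s in H by (field; lra). exact H.
Qed.

Lemma fbar_real f1 f2 a b c x y : in_fbar f1 f2 a b c (Some x, Some y) -> x <> - b /\ y = fabc f1 f2 a b c x.
Proof.
  intros [[x' [Hx E]]|[E|E]]; inversion E; subst; auto.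
Qed.

Lemma noAB f1 f2 xp yp xq yq s a b c : good f1 -> good f2 -> s < 0 -> xq <> xp ->
  yq - yp = s * (xq - xp) -> 0 < a ->
  in_fbar f1 f2 a b c (Some xp, Some yp) -> in_fbar f1 f2 a b c (Some xq, Some yq) ->
  is_derive (fabc f1 f2 a b c) xp s -> False.
Proof.
  intros G1 G2 Hs Hx Em Ha Hp Hq Hd.
  apply fbar_real in Hp. apply fbar_real in Hq. destruct Hp as [Hp1 Hp2]. destruct Hq as [Hq1 Hq2].
  destruct (Rlt_dec (- b) xp) as [Lp|Lp].
  - assert (Hd' := deriv_r f1 f2 a b c xp G1 ltac:(lra)).
    apply is_derive_unique in Hd. apply is_derive_unique in Hd'. rewrite Hd in Hd'.
    rewrite fabc_r in Hp2 by lra.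
    destruct (Rlt_dec (- b) xq) as [Lq|Lq].
    + rewrite fabc_r in Hq2 by lra.
      assert (T := stangent f1 (xp + b) (xq + b) G1 ltac:(lra) ltac:(lra) ltac:(lra)).
      replace (xq + b - (xp + b)) with (xq - xp) in T by ring.
      apply (Rmult_lt_compat_l a) in T; auto.
      assert (a * (Derive f1 (xp + b) * (xq - xp)) = s * (xq - xp)) by (rewrite Hd'; ring).
      nra.
    + rewrite fabc_l in Hq2 by lra.
      assert (H1 := proj1 G1 (xp + b) ltac:(lra)). assert (H2 := proj1 G2 (- xq - b) ltac:(lra)).
      assert (0 < a * f1 (xp + b)) by (apply Rmult_lt_0_compat; lra).
      assert (0 < a * f2 (- xq - b)) by (apply Rmult_lt_0_compat; lra).
      assert (0 < s * (xq - xp)) by nra. lra.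
  - assert (Lp' : xp < - b) by lra.
    assert (Hd' := deriv_l f1 f2 a b c xp G2 ltac:(lra)).
    apply is_derive_unique in Hd. apply is_derive_unique in Hd'. rewrite Hd in Hd'.
    rewrite fabc_l in Hp2 by lra.
    destruct (Rlt_dec xq (- b)) as [Lq|Lq].
    + rewrite fabc_l in Hq2 by lra.
      assert (T := stangent f2 (- xp - b) (- xq - b) G2 ltac:(lra) ltac:(lra) ltac:(lra)).
      replace (- xq - b - (- xp - b)) with (xp - xq) in T by ring.
      apply (Rmult_lt_compat_l a) in T; auto.
      assert (a * (Derive f2 (- xp - b) * (xp - xq)) = - (s * (xq - xp))) by (rewrite Hd'; ring).
      nra.
    + assert (Lq' : - b < xq) by (assert (xq <> - b) by auto; lra).
      rewrite fabc_r in Hq2 by lra.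
      assert (H1 := proj1 G1 (xq + b) ltac:(lra)). assert (H2 := proj1 G2 (- xp - b) ltac:(lra)).
      assert (0 < a * f1 (xq + b)) by (apply Rmult_lt_0_compat; lra).
      assert (0 < a * f2 (- xp - b)) by (apply Rmult_lt_0_compat; lra).
      assert (s * (xq - xp) < 0) by nra. lra.
Qed.

Lemma existB f1 f2 xp yp xq yq s : good f1 -> good f2 -> s < 0 -> xq <> xp -> yq <> yp ->
  yq - yp <> s * (xq - xp) ->
  exists a b c, 0 < a /\ in_fbar f1 f2 a b c (Some xp, Some yp) /\
    in_fbar f1 f2 a b c (Some xq, Some yq) /\ is_derive (fabc f1 f2 a b c) xp s.
Proof.
  intros G1 G2 Hs Hx Hy Hm.
  destruct (Rlt_le_dec xp xq) as [Lx|Lx].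
  -
    set (d := xq - xp). assert (Hd : 0 < d) by (unfold d; lra).
    set (Dl := yq - yp) in *.
    destruct (Rlt_le_dec (s * d) Dl) as [L1|L1].
    + destruct (Rlt_le_dec Dl 0) as [L2|L2].
      *
        set (K := Dl / (s * d)).
        assert (HK : Dl = K * (s * d)) by (unfold K; field; split; lra).
        assert (HK1 : 0 < K < 1) by nra.
        destruct (formP f1 d K G1 Hd HK1) as [u [Hu HP]].
        destruct (pR f1 f2 xp yp s u G1 Hu Hs) as [Ha [Hp Hd']].
        assert (HD := D_neg f1 u G1 Hu).
        exists (s / Derive f1 u), (u - xp), (yp - s / Derive f1 u * f1 u).
        refine (conj Ha (conj Hp (conj _ Hd'))). apply qR. unfold d in Hd; lra.
        replace (xq + (u - xp)) with (u + d) by (unfold d; ring).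
        assert (E : s / Derive f1 u * (f1 u - f1 (u + d)) = - Dl) by (rewrite HP, HK; field; lra).
        unfold Dl in E. lra.
      *
        assert (L2' : 0 < Dl) by (destruct (Rtotal_order Dl 0) as [H|[H|H]]; [lra | exfalso; apply Hy; unfold Dl in H; lra | lra]).
        set (T := Dl / (- s)).
        assert (HT : 0 < T) by (unfold T; apply Rdiv_lt_0_compat; lra).
        destruct (formS f2 f1 d T G2 G1 Hd HT) as [u [Hu HS]].
        destruct (pL f1 f2 xp yp s u G2 ltac:(lra) Hs) as [Ha [Hp Hd']].
        assert (HD := D_neg f2 u G2 ltac:(lra)).
        exists (s / Derive f2 u), (- xp - u), (yp + s / Derive f2 u * f2 u).
        refine (conj Ha (conj Hp (conj _ Hd'))). apply qR. unfold d in Hu; lra.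
        replace (xq + (- xp - u)) with (d - u) by (unfold d; ring).
        assert (E : s / Derive f2 u * (f2 u + f1 (d - u)) = Dl) by (rewrite HS; unfold T; field; lra).
        unfold Dl in E. lra.
    +
      assert (L1' : Dl < s * d) by (destruct (Rtotal_order Dl (s * d)) as [H|[H|H]]; [lra | exfalso; apply Hm; unfold Dl, d in *; lra | lra]).
      set (K := Dl / (s * d)).
      assert (HK : Dl = K * (s * d)) by (unfold K; field; split; lra).
      assert (Hsd : s * d < 0) by nra.
      assert (HK1 : 1 < K) by (destruct (Rle_lt_dec K 1) as [HK'|HK']; [nra|lra]).
      destruct (formQ f2 d K G2 Hd HK1) as [u [Hu HQ]].
      destruct (pL f1 f2 xp yp s u G2 ltac:(lra) Hs) as [Ha [Hp Hd']].
      assert (HD := D_neg f2 u G2 ltac:(lra)).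
      exists (s / Derive f2 u), (- xp - u), (yp + s / Derive f2 u * f2 u).
      refine (conj Ha (conj Hp (conj _ Hd'))). apply qL. unfold d in Hu; lra.
      replace (- xq - (- xp - u)) with (u - d) by (unfold d; ring).
      assert (E : s / Derive f2 u * (f2 (u - d) - f2 u) = - Dl) by (rewrite HQ, HK; field; lra).
      unfold Dl in E. lra.
  - assert (Lx' : xq < xp) by (destruct (Rtotal_order xq xp) as [H|[H|H]]; [lra | exfalso; apply Hx; auto | lra]).
    set (e := xp - xq). assert (He : 0 < e) by (unfold e; lra).
    set (Dl := yq - yp) in *.
    assert (Hm' : Dl <> - (s * e)) by (intro H; apply Hm; unfold Dl, e in *; lra).
    destruct (Rlt_le_dec (- (s * e)) Dl) as [L1|L1].
    +
      set (K := Dl / (- (s * e))).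
      assert (HK : Dl = K * (- (s * e))) by (unfold K; field; split; lra).
      assert (Hse : 0 < - (s * e)) by nra.
      assert (HK1 : 1 < K) by (destruct (Rle_lt_dec K 1) as [HK'|HK']; [nra|lra]).
      destruct (formQ f1 e K G1 He HK1) as [u [Hu HQ]].
      destruct (pR f1 f2 xp yp s u G1 ltac:(lra) Hs) as [Ha [Hp Hd']].
      assert (HD := D_neg f1 u G1 ltac:(lra)).
      exists (s / Derive f1 u), (u - xp), (yp - s / Derive f1 u * f1 u).
      refine (conj Ha (conj Hp (conj _ Hd'))). apply qR. unfold e in Hu; lra.
      replace (xq + (u - xp)) with (u - e) by (unfold e; ring).
      assert (E : s / Derive f1 u * (f1 (u - e) - f1 u) = Dl) by (rewrite HQ, HK; field; lra).
      unfold Dl in E. lra.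
    + assert (L1' : Dl < - (s * e)) by (destruct (Rtotal_order Dl (- (s * e))) as [H|[H|H]]; [lra | exfalso; apply Hm'; auto | lra]).
      destruct (Rlt_le_dec 0 Dl) as [L2|L2].
      *
        set (K := Dl / (- (s * e))).
        assert (HK : Dl = K * (- (s * e))) by (unfold K; field; split; lra).
        assert (Hse : 0 < - (s * e)) by nra.
        assert (HK1 : 0 < K < 1).
        { split; [destruct (Rle_lt_dec K 0) as [HK'|HK']; [nra|lra] | destruct (Rle_lt_dec 1 K) as [HK'|HK']; [nra|lra]]. }
        destruct (formP f2 e K G2 He HK1) as [u [Hu HP]].
        destruct (pL f1 f2 xp yp s u G2 Hu Hs) as [Ha [Hp Hd']].
        assert (HD := D_neg f2 u G2 Hu).
        exists (s / Derive f2 u), (- xp - u), (yp + s / Derive f2 u * f2 u).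
        refine (conj Ha (conj Hp (conj _ Hd'))). apply qL. unfold e in He; lra.
        replace (- xq - (- xp - u)) with (u + e) by (unfold e; ring).
        assert (E : s / Derive f2 u * (f2 u - f2 (u + e)) = Dl) by (rewrite HP, HK; field; lra).
        unfold Dl in E. lra.
      *
        assert (L2' : Dl < 0) by (destruct (Rtotal_order Dl 0) as [H|[H|H]]; [lra | exfalso; apply Hy; unfold Dl in H; lra | lra]).
        set (T := Dl / s).
        assert (HT : 0 < T) by (unfold T; apply Rdiv_neg_neg; lra).
        destruct (formS f1 f2 e T G1 G2 He HT) as [u [Hu HS]].
        destruct (pR f1 f2 xp yp s u G1 ltac:(lra) Hs) as [Ha [Hp Hd']].
        assert (HD := D_neg f1 u G1 ltac:(lra)).
        exists (s / Derive f1 u), (u - xp), (yp - s / Derive f1 u * f1 u).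
        refine (conj Ha (conj Hp (conj _ Hd'))). apply qL. unfold e in Hu; lra.
        replace (- xq - (u - xp)) with (e - u) by (unfold e; ring).
        assert (E : s / Derive f1 u * (f1 u + f2 (e - u)) = - Dl) by (rewrite HS; unfold T; field; lra).
        unfold Dl in E. lra.
Qed.

Theorem lemma4p12 (f1 f2 : R -> R) (xp yp s : R) (q : P) :
  strongly_hyperbolic f1 -> strongly_hyperbolic f2 ->
  s < 0 ->
  ~ parallel (Some xp, Some yp) q ->
  let A := exists t : R, in_lbar s t (Some xp, Some yp) /\ in_lbar s t q in
  let B := exists a1 b1 c1 : R, 0 < a1 /\
             in_fbar f1 f2 a1 b1 c1 (Some xp, Some yp) /\
             in_fbar f1 f2 a1 b1 c1 q /\
             is_derive (fabc f1 f2 a1 b1 c1) xp s in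
  (A \/ B) /\ ~ (A /\ B).
Proof.
  intros H1 H2 Hs Hnp A B.
  assert (G1 := sh_good f1 H1). assert (G2 := sh_good f2 H2).
  unfold parallel in Hnp. simpl in Hnp.
  destruct q as [[xq|] [yq|]]; simpl in Hnp.
  - assert (Hx : xq <> xp) by (intro E; apply Hnp; left; subst; reflexivity).
    assert (Hy : yq <> yp) by (intro E; apply Hnp; right; subst; reflexivity).
    destruct (Req_dec (yq - yp) (s * (xq - xp))) as [Em|Em].
    + split.
      * left. exists (yp - s * xp). split; left.
        -- exists xp. f_equal. f_equal. ring.
        -- exists xq. f_equal. f_equal. lra.
      * intros [_ [a [b [c [Ha [Hp [Hq Hd]]]]]]].
        exact (noAB f1 f2 xp yp xq yq s a b c G1 G2 Hs Hx Em Ha Hp Hq Hd).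
    + split.
      * right. exact (existB f1 f2 xp yp xq yq s G1 G2 Hs Hx Hy Em).
      * intros [[t [Ht1 Ht2]] _]. apply Em.
        destruct Ht1 as [[x1 E1]|E1]; [|discriminate]. destruct Ht2 as [[x2 E2]|E2]; [|discriminate].
        inversion E1. inversion E2. subst. ring.
  - assert (Hx : xq <> xp) by (intro E; apply Hnp; left; subst; reflexivity).
    split.
    + right. destruct (Rtotal_order xq xp) as [L|[L|L]]; [|contradiction|].
      * destruct (pR f1 f2 xp yp s (xp - xq) G1 ltac:(lra) Hs) as [Ha [Hp Hd]].
        do 3 eexists. refine (conj Ha (conj Hp (conj _ Hd))).
        right. left. f_equal. f_equal. ring.
      * destruct (pL f1 f2 xp yp s (xq - xp) G2 ltac:(lra) Hs) as [Ha [Hp Hd]].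
        do 3 eexists. refine (conj Ha (conj Hp (conj _ Hd))).
        right. left. f_equal. f_equal. ring.
    + intros [[t [_ Ht]] _]. destruct Ht as [[x E]|E]; discriminate.
  - assert (Hy : yq <> yp) by (intro E; apply Hnp; right; subst; reflexivity).
    split.
    + right. destruct (Rtotal_order yq yp) as [L|[L|L]]; [|contradiction|].
      * destruct (formB f1 ((yp - yq) / (- s)) G1) as [u [Hu HB]].
        { apply Rdiv_lt_0_compat; lra. }
        destruct (pR f1 f2 xp yp s u G1 Hu Hs) as [Ha [Hp Hd]].
        assert (HD := D_neg f1 u G1 Hu).
        assert (Ec : yp - s / Derive f1 u * f1 u = yq) by (rewrite HB; field; lra).
        rewrite Ec in Hp, Hd.
        exists (s / Derive f1 u), (u - xp), yq. refine (conj Ha (conj Hp (conj _ Hd))).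
        right. right. reflexivity.
      * destruct (formB f2 ((yq - yp) / (- s)) G2) as [u [Hu HB]].
        { apply Rdiv_lt_0_compat; lra. }
        destruct (pL f1 f2 xp yp s u G2 Hu Hs) as [Ha [Hp Hd]].
        assert (HD := D_neg f2 u G2 Hu).
        assert (Ec : yp + s / Derive f2 u * f2 u = yq) by (rewrite HB; field; lra).
        rewrite Ec in Hp, Hd.
        exists (s / Derive f2 u), (- xp - u), yq. refine (conj Ha (conj Hp (conj _ Hd))).
        right. right. reflexivity.
    + intros [[t [_ Ht]] _]. destruct Ht as [[x E]|E]; discriminate.
  - split.
    + left. exists (yp - s * xp). split.
      * left. exists xp. f_equal. f_equal. ring.
      * right. reflexivity.
    + intros [_ [a [b [c [_ [_ [Hq _]]]]]]].
      destruct Hq as [[x [_ E]]|[E|E]]; discriminate.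
Qed.
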